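(* Consider the discrete-time system with sensor and actuator attacks described in the context. Let $q$ be the largest integer such that for every $J_s\subset\{1,\ldots,n_y\}$ with $\card(J_s)\ge n_y-2q>0$ a complete UIO for $J_s$ exists, and suppose the set of attacked sensors satisfies $\card(W_y)\le q<\frac{n_y}{2}$ (the actuator attack $a_u$ is arbitrary; all actuators may be attacked). Run a complete UIO $\hat x_{J_s}$ for each $J_s\subset\{1,\dots,n_y\}$ with $\card(J_s)=n_y-q$ and a complete UIO $\hat x_{S_s}$ for each $S_s\subset\{1,\dots,n_y\}$ with $\card(S_s)=n_y-2q$. For each $k\ge0$ and each $J_s$ with $\card(J_s)=n_y-q$ define $$\pi_{J_s}(k)=\max_{S_s\subset J_s,\ \card(S_s)=n_y-2q}|\hat x_{J_s}(k)-\hat x_{S_s}(k)|,$$ let $\sigma_s(k)$ be a minimizer of $\pi_{J_s}(k)$ over all $J_s\subset\{1,\dots,n_y\}$ with $\card(J_s)=n_y-q$, and set $\hat x(k)=\hat x_{\sigma_s(k)}(k)$. Define $e(k)=\hat x_{\sigma_s(k)}(k)-x(k)$. Then there exists a class-$\mathcal{KL}$ function $\bar\beta$ such that $$|e(k)|\le\bar\beta(e_0,k)\quad\text{for all }k\ge0,\qquad e_0:=\max_{J_s:\card(J_s)=n_y-q,\ S_s:\card(S_s)=n_y-2q}\{|e_{J_s}(0)|,|e_{S_s}(0)|\},$$ where $e_{J_s}=\hat x_{J_s}-x$ and $e_{S_s}=\hat x_{S_s}-x$.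
   Context: System: $x(k+1)=f(x(k))+B(u(k)+a_u(k))$, $y(k)=h(x(k))+a_y(k)$, $k\in\mathbb{N}$, with state $x\in\mathbb{R}^n$, known input $u\in\mathbb{R}^{n_u}$, actuator attack $a_u\in\mathbb{R}^{n_u}$, output $y\in\mathbb{R}^{n_y}$, sensor attack $a_y=(a_{y1},\dots,a_{yn_y})^\top\in\mathbb{R}^{n_y}$ (attacks may be arbitrarily large), $f:\mathbb{R}^n\to\mathbb{R}^n$, $h:\mathbb{R}^n\to\mathbb{R}^{n_y}$, $B\in\mathbb{R}^{n\times n_u}$ of full column rank. The unknown set of attacked sensors is $W_y=\{i:a_{yi}(k)\ne0\text{ for some }k\ge0\}$, so $\supp(a_y(k))\subseteq W_y$ for all $k$ (it is time-invariant); similarly the attacked actuator set $W_u=\{i:a_{ui}(k)\ne0\text{ for some }k\ge0\}$ is time-invariant. For $J\subset\{1,\dots,n_y\}$, $y^J$, $a_y^J$ denote subvectors of components indexed by $J$. A complete UIO for $J_s$ is a system $\hat x_{J_s}(k+1)=f_{J_s}(\hat x_{J_s}(k),u(k),y^{J_s}(k),y^{J_s}(k+1))$ with $f_{J_s}:\mathbb{R}^n\times\mathbb{R}^{n_u}\times\mathbb{R}^{\card(J_s)}\times\mathbb{R}^{\card(J_s)}\to\mathbb{R}^n$ such that, with $e_{J_s}=\hat x_{J_s}-x$, there is a class-$\mathcal{KL}$ function $\beta_{J_s}$ with $|e_{J_s}(k)|\le\beta_{J_s}(|e_{J_s}(0)|,k)$ for all $k\ge0$, for all initial conditions $x(0),\hat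 x_{J_s}(0)\in\mathbb{R}^n$, all known inputs and all actuator attacks $a_u$, whenever $a_y^{J_s}(k)=0$ for all $k\ge0$. $|\cdot|$ is the Euclidean norm. *)

(* Defs.v *)
From HB Require Import structures.
From mathcomp Require Import all_boot all_order all_algebra.
From mathcomp Require Import all_classical all_reals all_analysis.
Set Implicit Arguments. Unset Strict Implicit. Unset Printing Implicit Defensive.
Import Order.TTheory GRing.Theory Num.Theory numFieldNormedType.Exports.
Local Open Scope ring_scope.
Local Open Scope classical_set_scope.

Section Defs.
Variable R : realType.

Definition enorm (m : nat) (v : 'cV[R]_m) : R := Num.sqrt (\sum_(i < m) (v i 0) ^+ 2).

Definition classK (alpha : R -> R) : Prop :=
  [/\ alpha 0 = 0,
      {within [set s : R | 0 <= s], continuous alpha} &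
      forall s t, 0 <= s -> s < t -> alpha s < alpha t].

Definition classKL (beta : R -> nat -> R) : Prop :=
  (forall k, classK (fun s => beta s k)) /\
  (forall s, 0 <= s ->
     (forall k, beta s k.+1 <= beta s k) /\ (fun k => beta s k) @ \oo --> 0).

(* subvector y^J of y indexed by J (components in increasing order) *)
Definition subv (ny : nat) (J : {set 'I_ny}) (y : 'cV[R]_ny) : 'cV[R]_#|J| :=
  \col_(i < #|J|) y (enum_val i) 0.

Fixpoint traj (n nu : nat) (f : 'cV[R]_n -> 'cV[R]_n) (B : 'M[R]_(n, nu))
  (x0 : 'cV[R]_n) (u au : nat -> 'cV[R]_nu) (k : nat) : 'cV[R]_n :=
  match k with
  | 0 => x0
  | k'.+1 => f (traj f B x0 u au k') + B *m (u k' + au k')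
  end.

Definition outp (n ny : nat) (h : 'cV[R]_n -> 'cV[R]_ny) (x : nat -> 'cV[R]_n)
  (ay : nat -> 'cV[R]_ny) (k : nat) : 'cV[R]_ny := h (x k) + ay k.

Fixpoint obs (n nu ny : nat) (J : {set 'I_ny})
  (fJ : 'cV[R]_n -> 'cV[R]_nu -> 'cV[R]_#|J| -> 'cV[R]_#|J| -> 'cV[R]_n)
  (xh0 : 'cV[R]_n) (u : nat -> 'cV[R]_nu) (y : nat -> 'cV[R]_ny) (k : nat)
  : 'cV[R]_n :=
  match k with
  | 0 => xh0
  | k'.+1 => fJ (obs fJ xh0 u y k') (u k') (subv J (y k')) (subv J (y k'.+1))
  end.

Definition complete_UIO (n nu ny : nat) (f : 'cV[R]_n -> 'cV[R]_n)
  (h : 'cV[R]_n -> 'cV[R]_ny) (B : 'M[R]_(n, nu)) (J : {set 'I_ny})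
  (fJ : 'cV[R]_n -> 'cV[R]_nu -> 'cV[R]_#|J| -> 'cV[R]_#|J| -> 'cV[R]_n) : Prop :=
  exists beta : R -> nat -> R, classKL beta /\
    forall (x0 xh0 : 'cV[R]_n) (u au : nat -> 'cV[R]_nu) (ay : nat -> 'cV[R]_ny),
      (forall k, subv J (ay k) = 0) ->
      let x := traj f B x0 u au in
      let e := fun k => obs fJ xh0 u (outp h x ay) k - x k in
      forall k, enorm (e k) <= beta (enorm (e 0%N)) k.

Definition Wy (ny : nat) (ay : nat -> 'cV[R]_ny) : {set 'I_ny} :=
  [set i : 'I_ny | `[< exists k, ay k i 0 <> 0 >]].

Definition q_prop (n nu ny : nat) (f : 'cV[R]_n -> 'cV[R]_n)
  (h : 'cV[R]_n -> 'cV[R]_ny) (B : 'M[R]_(n, nu)) (q : nat) : Prop :=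
  (2 * q < ny)%N /\
  forall J : {set 'I_ny}, (ny - 2 * q <= #|J|)%N -> exists fJ : 'cV[R]_n -> 'cV[R]_nu -> 'cV[R]_#|J| -> 'cV[R]_#|J| -> 'cV[R]_n,
    complete_UIO f h B fJ.

Definition piJ (n ny q : nat) (xhJ xhS : {set 'I_ny} -> nat -> 'cV[R]_n)
  (J : {set 'I_ny}) (k : nat) : R :=
  \big[Num.max/0]_(S : {set 'I_ny} | (S \subset J) && (#|S| == ny - 2 * q)%N)
     enorm (xhJ J k - xhS S k).

End Defs.

(* Main.v *)
Require Import Defs.
From HB Require Import structures.
From mathcomp Require Import all_boot all_order all_algebra.
From mathcomp Require Import all_classical all_reals all_analysis.
From mathcomp Require Import ring lra zify.
Import Order.TTheory GRing.Theory Num.Theory numFieldNormedType.Exports.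
Local Open Scope ring_scope.
Local Open Scope classical_set_scope.
Set Implicit Arguments. Unset Strict Implicit.
Lemma sub_card (T : finType) (A : {set T}) m : (m <= #|A|)%N ->
  exists B : {set T}, B \subset A /\ #|B| = m.
Proof.
move=> hm; exists [set x in take m (enum A)]; split.
  by apply/fintype.subsetP => x; rewrite inE => /mem_take; rewrite mem_enum.
rewrite cardsE (card_uniqP _); last exact/take_uniq/enum_uniq.
by rewrite size_take -cardE; case: ltnP => //; move=> h; apply/eqP; rewrite eqn_leq hm h.
Qed.
Lemma cs (R : realType) m (a b : 'I_m -> R) :
  \sum_i a i * b i <= Num.sqrt (\sum_i a i ^+ 2) * Num.sqrt (\sum_i b i ^+ 2).
Proof.
set A := \sum_i a i ^+ 2; set B := \sum_i b i ^+ 2; set C := \sum_i a i * b i.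
have A0 : 0 <= A by apply: sumr_ge0 => i _; exact: sqr_ge0.
have B0 : 0 <= B by apply: sumr_ge0 => i _; exact: sqr_ge0.
set s := Num.sqrt A; set t := Num.sqrt B.
have s0 : 0 <= s by exact: sqrtr_ge0.
have t0 : 0 <= t by exact: sqrtr_ge0.
have ss : s ^+ 2 = A by rewrite sqr_sqrtr.
have tt : t ^+ 2 = B by rewrite sqr_sqrtr.
have E : \sum_i (t * a i - s * b i) ^+ 2 = t ^+ 2 * A - (2 * t * s) * C + s ^+ 2 * B.
  rewrite /A /B /C !mulr_sumr -sumrB -big_split /=; apply: eq_bigr => i _; ring.
have H : 0 <= t ^+ 2 * A - (2 * t * s) * C + s ^+ 2 * B.
  by rewrite -E; apply: sumr_ge0 => i _; exact: sqr_ge0.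
have [st0|st0] := eqVneq (s * t) 0.
  have : (s == 0) || (t == 0) by rewrite -mulf_eq0 st0.
  case/orP => /eqP z.
  - have : A = 0 by rewrite -ss z expr0n.
    move/eqP; rewrite psumr_eq0 => [/allP h|i _]; last exact: sqr_ge0.
    rewrite /C big1 ?st0 // => i _.
    have := h i (mem_index_enum i); rewrite /= sqrf_eq0 => /eqP ->; by rewrite mul0r.
  - have : B = 0 by rewrite -tt z expr0n.
    move/eqP; rewrite psumr_eq0 => [/allP h|i _]; last exact: sqr_ge0.
    rewrite /C big1 ?st0 // => i _.
    have := h i (mem_index_enum i); rewrite /= sqrf_eq0 => /eqP ->; by rewrite mulr0.
have stp : 0 < s * t by rewrite lt0r st0 mulr_ge0.
rewrite -ss -tt in H.
have H2 : (s * t) * C <= (s * t) * (s * t) by nra.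
by rewrite -(ler_pM2l stp).
Qed.

Lemma enorm_ge0 (R : realType) m (v : 'cV[R]_m) : 0 <= enorm v.
Proof. exact: sqrtr_ge0. Qed.

Lemma enormD (R : realType) m (a b : 'cV[R]_m) : enorm (a + b) <= enorm a + enorm b.
Proof.
rewrite /enorm.
have := @cs _ _ (fun i => a i 0) (fun i => b i 0).
set A := \sum_i a i 0 ^+ 2; set B := \sum_i b i 0 ^+ 2.
set C := \sum_i a i 0 * b i 0 => hC.
have A0 : 0 <= A by apply: sumr_ge0 => i _; exact: sqr_ge0.
have B0 : 0 <= B by apply: sumr_ge0 => i _; exact: sqr_ge0.
have E : \sum_i (a + b) i 0 ^+ 2 = A + 2 * C + B.
  rewrite /A /B /C mulr_sumr -!big_split /=; apply: eq_bigr => i _; rewrite !mxE; ring.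
rewrite E.
have s0 := sqrtr_ge0 A; have t0 := sqrtr_ge0 B.
rewrite -[X in _ <= X]ger0_norm ?addr_ge0 // -sqrtr_sqr ler_sqrt ?sqr_ge0 //.
rewrite sqrrD !sqr_sqrtr //. nra.
Qed.

Lemma enormN (R : realType) m (a : 'cV[R]_m) : enorm (- a) = enorm a.
Proof. by rewrite /enorm; congr Num.sqrt; apply: eq_bigr => i _; rewrite !mxE sqrrN. Qed.

Lemma enorm_tri (R : realType) m (a b c : 'cV[R]_m) : enorm (a - c) <= enorm (a - b) + enorm (b - c).
Proof. by have := @enormD _ _ (a - b) (b - c); rewrite addrA subrK. Qed.
Definition wKL (R : realType) (beta : R -> nat -> R) : Prop :=
  (forall k, beta 0 k = 0) /\
  (forall k, {within [set s : R | 0 <= s], continuous (fun s => beta s k)}) /\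
  (forall k s t, 0 <= s -> s <= t -> beta s k <= beta t k) /\
  (forall s, 0 <= s ->
     (forall k, beta s k.+1 <= beta s k) /\ (fun k => beta s k) @ \oo --> 0).

Lemma KL_ge (R : realType) (b : R -> nat -> R) k s t : classKL b -> 0 <= s -> s <= t -> b s k <= b t k.
Proof.
move=> [hK _] s0; rewrite le_eqVlt => /orP[/eqP->//|st].
by case: (hK k) => _ _ /(_ s t s0 st) /ltW.
Qed.

Lemma KL_ge0 (R : realType) (b : R -> nat -> R) k s : classKL b -> 0 <= s -> 0 <= b s k.
Proof.
move=> hb s0; have := @KL_ge _ b k 0 s hb (lexx 0) s0.
by case: hb => /(_ k) [-> _ _] _.
Qed.

Lemma KL_wKL (R : realType) (b : R -> nat -> R) : classKL b -> wKL b.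
Proof.
move=> hb; have hb' := hb; case: hb' => hK hL; split; first by move=> k; case: (hK k).
split; first by move=> k; case: (hK k).
split=> //; move=> k s t; exact: KL_ge.
Qed.

Lemma wKL0 (R : realType) : wKL (fun (_ : R) (_ : nat) => 0 : R).
Proof.
split=> //; split; first by move=> k; exact: cst_continuous.
split=> // s _; split=> //; exact: cvg_cst.
Qed.

Lemma wKLD (R : realType) (a b : R -> nat -> R) : wKL a -> wKL b -> wKL (fun s k => a s k + b s k).
Proof.
move=> [a0 [ac [am al]]] [b0 [bc [bm bl]]]; split; first by move=> k; rewrite a0 b0 addr0.
split; first by move=> k x; apply: cvgD; [exact: ac | exact: bc].
split; first by move=> k s t s0 st; apply: lerD; [exact: am | exact: bm].
move=> s s0; have [a1 a2] := al s s0; have [b1 b2] := bl s s0; split.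
  by move=> k; apply: lerD.
by rewrite -[0](addr0 0); apply: cvgD.
Qed.

Lemma KLD (R : realType) (a b : R -> nat -> R) : classKL a -> wKL b -> classKL (fun s k => a s k + b s k).
Proof.
move=> ha hb; have [c0 [cc [cm cl]]] := wKLD (KL_wKL ha) hb.
split; last exact: cl.
move=> k; split=> //; move=> s t s0 st.
case: hb => _ [_ [bm _]].
apply: ltr_leD; first by case: ha => /(_ k) [_ _ ->].
by apply: bm => //; exact: ltW.
Qed.

Lemma wKL_sum (R : realType) (I : Type) (r : seq I) (P : pred I) (F : I -> R -> nat -> R) :
  (forall i, P i -> wKL (F i)) -> wKL (fun s k => \sum_(i <- r | P i) F i s k).
Proof.
move=> hF; elim: r => [|i r IH].
  have -> : (fun s k => \sum_(i <- [::] | P i) F i s k) = (fun _ _ => 0 : R).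
    by apply/funext=> s; apply/funext=> k; rewrite big_nil.
  exact: wKL0.
case Pi: (P i).
  have -> : (fun s k => \sum_(j <- i :: r | P j) F j s k) =
            (fun s k => F i s k + \sum_(j <- r | P j) F j s k).
    by apply/funext=> s; apply/funext=> k; rewrite big_cons Pi.
  by apply: wKLD => //; exact: hF.
have -> : (fun s k => \sum_(j <- i :: r | P j) F j s k) =
          (fun s k => \sum_(j <- r | P j) F j s k).
  by apply/funext=> s; apply/funext=> k; rewrite big_cons Pi.
exact: IH.
Qed.

Lemma sum_ge_term (R : realType) (I : finType) (P : pred I) (F : I -> R) j :
  (forall i, P i -> 0 <= F i) -> P j -> F j <= \sum_(i | P i) F i.
Proof.
move=> h Pj; rewrite (bigD1 j) //= lerDl; apply: sumr_ge0 => i /andP[Pi _]; exact: h.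
Qed.

Unset Implicit Arguments. Set Strict Implicit.

Theorem theorem1 (R : realType) (n nu ny : nat)
  (f : 'cV[R]_n -> 'cV[R]_n) (h : 'cV[R]_n -> 'cV[R]_ny) (B : 'M[R]_(n, nu))
  (HB : \rank B = nu)
  (q : nat) (Hq : q_prop f h B q) (Hqmax : forall q', q_prop f h B q' -> (q' <= q)%N)
  (Hqlt : (2 * q < ny)%N)
  (fJ : forall J : {set 'I_ny},
        'cV[R]_n -> 'cV[R]_nu -> 'cV[R]_#|J| -> 'cV[R]_#|J| -> 'cV[R]_n)
  (fS : forall S : {set 'I_ny},
        'cV[R]_n -> 'cV[R]_nu -> 'cV[R]_#|S| -> 'cV[R]_#|S| -> 'cV[R]_n)
  (HfJ : forall J : {set 'I_ny}, #|J| = (ny - q)%N -> complete_UIO f h B (fJ J))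
  (HfS : forall S : {set 'I_ny}, #|S| = (ny - 2 * q)%N -> complete_UIO f h B (fS S)) :
  exists betab : R -> nat -> R, classKL betab /\
    forall (x0 : 'cV[R]_n) (u au : nat -> 'cV[R]_nu) (ay : nat -> 'cV[R]_ny)
           (xhJ0 xhS0 : {set 'I_ny} -> 'cV[R]_n) (sigma : nat -> {set 'I_ny}),
      (#|Wy ay| <= q)%N ->
      let x := traj f B x0 u au in
      let y := outp h x ay in
      let xhJ := fun J k => obs (fJ J) (xhJ0 J) u y k in
      let xhS := fun S k => obs (fS S) (xhS0 S) u y k in
      (forall k, #|sigma k| = (ny - q)%N /\
         forall J : {set 'I_ny}, #|J| = (ny - q)%N ->
           piJ q xhJ xhS (sigma k) k <= piJ q xhJ xhS J k) ->
      let e0 := Num.max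
        (\big[Num.max/0]_(J : {set 'I_ny} | #|J| == (ny - q)%N) enorm (xhJ J 0%N - x 0%N))
        (\big[Num.max/0]_(S : {set 'I_ny} | #|S| == (ny - 2 * q)%N) enorm (xhS S 0%N - x 0%N)) in
      forall k, enorm (xhJ (sigma k) k - x k) <= betab e0 k.
Proof.
have cJ : forall J : {set 'I_ny}, exists b : R -> nat -> R, #|J| = (ny - q)%N ->
   classKL b /\ (forall x0 xh0 u au ay, (forall k, subv J (ay k) = 0) -> forall k,
     enorm (obs (fJ J) xh0 u (outp h (traj f B x0 u au) ay) k - traj f B x0 u au k) <=
     b (enorm (obs (fJ J) xh0 u (outp h (traj f B x0 u au) ay) 0 - traj f B x0 u au 0)) k).
  move=> J; case: (boolP (#|J| == ny - q)%N) => [/eqP hJ | hJ].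
    by have [b [hb hb2]] := HfJ J hJ; exists b => _; split.
  by exists (fun _ _ => 0) => e; rewrite e eqxx in hJ.
have cS : forall J : {set 'I_ny}, exists b : R -> nat -> R, #|J| = (ny - 2 * q)%N ->
   classKL b /\ (forall x0 xh0 u au ay, (forall k, subv J (ay k) = 0) -> forall k,
     enorm (obs (fS J) xh0 u (outp h (traj f B x0 u au) ay) k - traj f B x0 u au k) <=
     b (enorm (obs (fS J) xh0 u (outp h (traj f B x0 u au) ay) 0 - traj f B x0 u au 0)) k).
  move=> J; case: (boolP (#|J| == ny - 2 * q)%N) => [/eqP hJ | hJ].
    by have [b [hb hb2]] := HfS J hJ; exists b => _; split.
  by exists (fun _ _ => 0) => e; rewrite e eqxx in hJ.
have [bJ hbJ] := choice cJ.
have [bS hbS] := choice cS.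
have hJ0' : (ny - q <= #|[set: 'I_ny]%SET|)%N by rewrite cardsT card_ord leq_subr.
have [J0 [_ hJ0]] := sub_card hJ0'.
pose TJ := fun s k => \sum_(J : {set 'I_ny} | #|J| == (ny - q)%N) bJ J s k.
pose TS := fun s k => \sum_(J : {set 'I_ny} | #|J| == (ny - 2 * q)%N) bS J s k.
pose T := fun s k => TJ s k + TS s k.
have wT : wKL T.
  apply: wKLD; apply: wKL_sum => J /eqP hJ.
    exact: KL_wKL (hbJ J hJ).1.
  exact: KL_wKL (hbS J hJ).1.
exists (fun s k => bJ J0 s k + (T s k + T s k)); split.
  exact: KLD (hbJ J0 hJ0).1 (wKLD wT wT).
move=> x0 u au ay xhJ0 xhS0 sigma hW x y xhJ xhS hsig e0 k.
have hJe : forall J : {set 'I_ny}, #|J| = (ny - q)%N -> enorm (xhJ J 0%N - x 0%N) <= e0.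
  move=> J hJ; rewrite /e0 le_max; apply/orP; left.
  by apply: (@le_bigmax_cond _ _ _ 0 _ (fun J : {set 'I_ny} => #|J| == (ny - q)%N)); rewrite hJ.
have hSe : forall J : {set 'I_ny}, #|J| = (ny - 2 * q)%N -> enorm (xhS J 0%N - x 0%N) <= e0.
  move=> J hJ; rewrite /e0 le_max; apply/orP; right.
  by apply: (@le_bigmax_cond _ _ _ 0 _ (fun J : {set 'I_ny} => #|J| == (ny - 2 * q)%N)); rewrite hJ.
have e00 : 0 <= e0 by apply: le_trans (hJe J0 hJ0); exact: enorm_ge0.
have afree : forall A : {set 'I_ny}, A \subset ~: Wy ay -> forall k, subv A (ay k) = 0.
  move=> A hA k'; apply/matrixP => i j; rewrite !mxE.
  have : enum_val i \in ~: Wy ay by apply: (fintype.subsetP hA); exact: enum_valP.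
  rewrite !inE => hn; apply/eqP; apply: contraNT hn => hne; apply/asboolP; exists k'.
  exact/eqP.
have bndJ : forall J : {set 'I_ny}, #|J| = (ny - q)%N -> J \subset ~: Wy ay ->
    enorm (xhJ J k - x k) <= TJ e0 k.
  move=> J hJ hA; have [hb1 hb2] := hbJ J hJ.
  apply: le_trans (hb2 x0 (xhJ0 J) u au ay (afree J hA) k) _.
  apply: le_trans (KL_ge k hb1 (enorm_ge0 _) (hJe J hJ)) _.
  apply: (sum_ge_term (P := fun J : {set 'I_ny} => #|J| == (ny - q)%N)); last by rewrite hJ.
  by move=> i /eqP hi; apply: KL_ge0 (hbJ i hi).1 e00.
have bndS : forall J : {set 'I_ny}, #|J| = (ny - 2 * q)%N -> J \subset ~: Wy ay ->
    enorm (xhS J k - x k) <= TS e0 k.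
  move=> J hJ hA; have [hb1 hb2] := hbS J hJ.
  apply: le_trans (hb2 x0 (xhS0 J) u au ay (afree J hA) k) _.
  apply: le_trans (KL_ge k hb1 (enorm_ge0 _) (hSe J hJ)) _.
  apply: (sum_ge_term (P := fun J : {set 'I_ny} => #|J| == (ny - 2 * q)%N)); last by rewrite hJ.
  by move=> i /eqP hi; apply: KL_ge0 (hbS i hi).1 e00.
have TJ0 : 0 <= TJ e0 k.
  by apply: sumr_ge0 => i /eqP hi; apply: KL_ge0 (hbJ i hi).1 e00.
have TS0 : 0 <= TS e0 k.
  by apply: sumr_ge0 => i /eqP hi; apply: KL_ge0 (hbS i hi).1 e00.
have hJs' : (ny - q <= #|~: Wy ay|)%N by rewrite cardsCs finset.setCK card_ord; lia.
have [Js [hJs1 hJs2]] := sub_card hJs'.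
have [hsk1 hsk2] := hsig k.
have hI : (ny - 2 * q <= #|sigma k :&: Js|)%N.
  have := cardsUI (sigma k) Js; have := max_card (sigma k :|: Js); rewrite card_ord.
  rewrite hsk1 hJs2; lia.
have [S [hS1 hS2]] := sub_card hI.
have hSW : S \subset ~: Wy ay.
  by apply: (fintype.subset_trans _ hJs1); apply: (fintype.subset_trans hS1); exact: finset.subsetIr.
have hSs : S \subset sigma k by apply: (fintype.subset_trans hS1); exact: finset.subsetIl.
have piJs : piJ q xhJ xhS Js k <= T e0 k.
  apply: bigmax_le; first by apply: addr_ge0.
  move=> S' /andP[hS'1 /eqP hS'2].
  apply: le_trans (enorm_tri _ (x k) _) _.
  apply: lerD; first exact: bndJ.
  rewrite -enormN opprB.
  by apply: bndS => //; apply: (fintype.subset_trans hS'1 hJs1).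
apply: le_trans (enorm_tri _ (xhS S k) _) _.
have h1 : enorm (xhJ (sigma k) k - xhS S k) <= piJ q xhJ xhS (sigma k) k.
  by apply: (@le_bigmax_cond _ _ _ 0 _ (fun S : {set 'I_ny} => (S \subset sigma k) && (#|S| == (ny - 2 * q)%N))); rewrite hSs hS2 eqxx.
have h2 := hsk2 Js hJs2.
have h3 := bndS S hS2 hSW.
have h4 : 0 <= bJ J0 e0 k := KL_ge0 k (hbJ J0 hJ0).1 e00.
rewrite /T in piJs *.
set P1 := piJ _ _ _ (sigma k) k in h1 h2 *.
set P2 := piJ _ _ _ Js k in h2 piJs.
set A1 := enorm _ in h1 *.
set A2 := enorm _ in h3 *.
lra.
Qed.
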